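(* Let $X$ be an $n\times n$ Boolean matrix and define $P_0=X$ and $P_k=P_{k-1}+P_{k-1}^2+P_{k-1}^3$ for $k\ge1$. Then $X^*=I_n+P_{\lceil\log_2 n\rceil}$.
   Context: Boolean matrices have entries in $\{0,1\}$. $+$ is the entrywise OR and the product is the Boolean product. $I_n$ is the $n\times n$ identity matrix. The Kleene closure is $X^*=\sum_{k\ge0}X^k$ with $X^0=I_n$; equivalently, $X^*[x,y]=1$ iff $x=y$ or there is a directed path from $x$ to $y$ in the digraph with adjacency matrix $X$. *)

(* Defs.v *)
From mathcomp Require Import all_boot all_algebra.
Set Implicit Arguments. Unset Strict Implicit. Unset Printing Implicit Defensive.

Definition bmx_add n (A B : 'M[bool]_n) : 'M[bool]_n :=
  \matrix_(i, j) (A i j || B i j).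
Definition bmx_mul n (A B : 'M[bool]_n) : 'M[bool]_n :=
  \matrix_(i, j) [exists k, A i k && B k j].
Definition bmx_id n : 'M[bool]_n := \matrix_(i, j) (i == j).

(* Kleene closure X^*: X^*[x,y] = 1 iff x = y or there is a directed path
   from x to y in the digraph with adjacency matrix X, i.e. the reflexive
   transitive closure (mathcomp's connect) of the adjacency relation. *)
Definition bmx_star n (X : 'M[bool]_n) : 'M[bool]_n :=
  \matrix_(i, j) connect (fun a b => X a b) i j.

Fixpoint Pseq n (X : 'M[bool]_n) (k : nat) : 'M[bool]_n :=
  match k with
  | 0 => X
  | k'.+1 => let P := Pseq X k' in
      bmx_add (bmx_add P (bmx_mul P P)) (bmx_mul (bmx_mul P P) P)
  end.

(* Main.v *)
Require Import Defs.
From mathcomp Require Import all_boot all_algebra.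
From mathcomp Require Import zify.

Section S.
Variables (n : nat) (X : 'M[bool]_n).
Let e : rel 'I_n := fun a b => X a b.

Lemma Pconn k i j : Pseq X k i j -> connect e i j.
Proof.
elim: k i j => [|k IH] i j /=; first by move=> h; apply: connect1.
rewrite /bmx_add /bmx_mul !mxE => /orP [/orP [h|] |].
- exact: IH.
- move=> /existsP [m /andP [h1 h2]].
  by apply: connect_trans (IH _ _ h1) (IH _ _ h2).
- move=> /existsP [m /andP [+ h2]]; rewrite mxE => /existsP [m' /andP [h1 h3]].
  by apply: connect_trans (connect_trans (IH _ _ h1) (IH _ _ h3)) (IH _ _ h2).
Qed.

Lemma Ppath k : forall x p, path e x p -> 0 < size p <= 3 ^ k ->
  Pseq X k x (last x p).
Proof.
elim: k => [|k IH] x p.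
  case: p => [|y [|z p]] //= /andP [h _] _; exact h.
move=> hp /andP [hs1 hs2] /=; rewrite /bmx_add /bmx_mul !mxE.
set m := 3 ^ k.
have m0 : 0 < m by rewrite expn_gt0.
have em : 3 ^ k.+1 = 3 * m by rewrite expnS.
case: (leqP (size p) m) => h1.
  by rewrite IH // hs1 h1.
have sp1 : size (take m p) = m by rewrite size_take h1.
move: hp; rewrite -(cat_take_drop m p) cat_path => /andP [hp1 hp2].
rewrite last_cat.
have P1 : Pseq X k x (last x (take m p)) by apply: IH; rewrite // sp1 m0 leqnn.
case: (leqP (size p) (m + m)) => h2.
  apply/orP; left; apply/orP; right; apply/existsP.
  exists (last x (take m p)); rewrite P1 /=; apply: IH => //.
  by rewrite size_drop; apply/andP; split; lia.
set q := drop m p.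
have sq : size q = size p - m by rewrite size_drop.
have sq1 : size (take m q) = m by rewrite size_take sq ifT //; lia.
move: hp2; rewrite -/q -(cat_take_drop m q) cat_path => /andP [hq1 hq2].
rewrite last_cat.
apply/orP; right; apply/existsP.
exists (last (last x (take m p)) (take m q)); apply/andP; split.
  rewrite mxE; apply/existsP; exists (last x (take m p)); rewrite P1 /=.
  by apply: IH; rewrite // sq1 m0 leqnn.
apply: IH => //; rewrite size_drop; apply/andP; split; lia.
Qed.

End S.

Lemma exp23 k : 2 ^ k <= 3 ^ k.
Proof. by elim: k => // k IH; rewrite !expnS leq_mul. Qed.

(* up_log 2 n = ceil(log_2 n) for n >= 1 (smallest e with n <= 2^e). *)
Theorem mainTheorem11 (n : nat) (X : 'M[bool]_n) :
  bmx_star X = bmx_add (bmx_id n) (Pseq X (up_log 2 n)).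
Proof.
apply/matrixP => i j; rewrite !mxE.
apply/idP/idP.
- case: (eqVneq i j) => [-> //|nij].
  move=> /connectP [p hp ejp]; subst j; move: nij; case: (shortenP hp) => p' hp' up' _ nij.
  apply/orP; right; apply: Ppath => //.
  have hn : size (i :: p') <= n by have := max_card (mem (i :: p')); rewrite (card_uniqP up') card_ord.
  have hb : n <= 3 ^ up_log 2 n by apply: leq_trans (up_logP n _) (exp23 _).
  apply/andP; split.
    by case: p' {hp' up' hn} nij => //=; rewrite eqxx.
  by rewrite /= in hn; lia.
- case/orP => [/eqP -> | h]; first exact: connect0.
  exact: Pconn h.
Qed.
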